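(* For every $M\ge \frac52$, every deterministic semi-online algorithm with migration factor $M$ for scheduling on two hierarchical machines with known optimal makespan (bin stretching) has competitive ratio at least $1+\frac{2}{2M+3}=\frac{2M+5}{2M+3}$.
   Context: Model (two hierarchical machines with migration, bin stretching). Jobs $1,2,\dots,n$ arrive one by one ($n$ unknown in advance). Job $j$ has a size $p_j>0$ and a grade of service (GoS) $g_j\in\{1,2\}$; a job of GoS $1$ may only be processed on machine $m_1$, a job of GoS $2$ may be processed on $m_1$ or on $m_2$. The load of a machine is the total size of the jobs assigned to it, and the makespan is the maximum load. When job $j$ arrives, the algorithm must assign it to a machine, and at the same time it may reassign (migrate) previously arrived jobs to other machines (respecting the GoS constraints), provided that the total size of the migrated jobs is at most $M\cdot p_j$; $M\ge 0$ is the migration factor. Bin stretching: the optimal offline makespan of the complete input is known in advance to the algorithm (and scaled to $1$). The competitive ratio of an algorithm is the supremum over inputs of (algorithm's makespan)/(optimal makespan). *)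

(* Defs.v *)
From HB Require Import structures.
From mathcomp Require Import all_boot all_order all_algebra.
From mathcomp Require Import reals.
Set Implicit Arguments. Unset Strict Implicit. Unset Printing Implicit Defensive.
Import Order.TTheory GRing.Theory Num.Theory.
Local Open Scope ring_scope.

(* Grade of service: GoS1 jobs only on m1, GoS2 jobs on m1 or m2. *)
Inductive gos := GoS1 | GoS2.
Inductive machine := m1 | m2.

Definition allowed (g : gos) (m : machine) : bool :=
  match g, m with GoS1, m2 => false | _, _ => true end.

Definition same_machine (a b : machine) : bool :=
  match a, b with m1, m1 | m2, m2 => true | _, _ => false end.

Section Defs.
Variable R : realType.

(* A job: (size, grade of service). *)
Definition job := (R * gos)%type.
Definition dummy_job : job := (0, GoS2).

(* An assignment maps job indices (0-based arrival order) to machines;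
   for a job sequence s only the indices < size s are relevant. *)
Definition assignment := nat -> machine.

Definition feasible (s : seq job) (a : assignment) : Prop :=
  forall i, (i < size s)%N -> allowed (nth dummy_job s i).2 (a i).

Definition load (s : seq job) (a : assignment) (m : machine) : R :=
  \sum_(i < size s) (if same_machine (a i) m then (nth dummy_job s i).1 else 0).

Definition makespan (s : seq job) (a : assignment) : R :=
  Num.max (load s a m1) (load s a m2).

Definition opt_is (s : seq job) (v : R) : Prop :=
  (exists a, feasible s a /\ makespan s a = v) /\
  (forall a, feasible s a -> v <= makespan s a).

(* Admissible inputs of the bin stretching problem: positive sizes and
   optimal makespan (known in advance) scaled to 1. *)
Definition valid_input (s : seq job) : Prop :=
  (forall i, (i < size s)%N -> 0 < (nth dummy_job s i).1) /\ opt_is s 1.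

(* A deterministic semi-online algorithm: after the arrival of the jobs
   of the prefix p (the last of which is the newly arrived job), it outputs
   the assignment of all jobs of p. *)
Definition algorithm := seq job -> assignment.

Definition migrated (s : seq job) (k : nat) (a b : assignment) : R :=
  \sum_(i < k) (if same_machine (a i) (b i) then 0 else (nth dummy_job s i).1).

Definition run_ok (M : R) (A : algorithm) (s : seq job) : Prop :=
  forall k, (k < size s)%N ->
    feasible (take k.+1 s) (A (take k.+1 s)) /\
    migrated s k (A (take k s)) (A (take k.+1 s)) <= M * (nth dummy_job s k).1.

Definition migration_algorithm (M : R) (A : algorithm) : Prop :=
  forall s, valid_input s -> run_ok M A s.

Definition alg_makespan (A : algorithm) (s : seq job) : R := makespan s (A s).

End Defs.

(* Main.v *)
Require Import Defs.
From HB Require Import structures.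
From mathcomp Require Import all_boot all_order all_algebra.
From mathcomp Require Import reals lra ring.
Import Order.TTheory GRing.Theory Num.Theory.
Set Implicit Arguments. Unset Strict Implicit.
Local Open Scope ring_scope.

Lemma same_machineP (x y : machine) : same_machine x y -> x = y.
Proof. by case: x; case: y. Qed.

Lemma stuck_step (R : realType) (M : R) (A : algorithm R) s k i :
  run_ok M A s -> (k < size s)%N -> (i < k)%N ->
  (forall j, (j < k)%N -> 0 <= (nth (dummy_job R) s j).1) ->
  M * (nth (dummy_job R) s k).1 < (nth (dummy_job R) s i).1 ->
  A (take k s) i = A (take k.+1 s) i.
Proof.
move=> rok hk hik hpos hlt; have [_ hm] := rok k hk.
case E: (same_machine (A (take k s) i) (A (take k.+1 s) i)).
  exact: same_machineP.
exfalso.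
have : (nth (dummy_job R) s i).1 <= migrated s k (A (take k s)) (A (take k.+1 s)).
  rewrite /migrated (bigD1 (Ordinal hik)) //= E lerDl.
  apply: sumr_ge0 => j _; case: ifP => _ //; exact: hpos (ltn_ord j).
move=> h; have := le_lt_trans h (le_lt_trans hm hlt); by rewrite ltxx.
Qed.

Definition sA (R : realType) (a b : R) : seq (job R) :=
  [:: (a, GoS2); (b, GoS2); (1 - a, GoS2); ((1-b)/4, GoS1); ((1-b)/4, GoS1);
      ((1-b)/4, GoS1); ((1-b)/4, GoS1)].
Definition sB (R : realType) (a b : R) : seq (job R) :=
  [:: (a, GoS2); (b, GoS2); ((1-a)/4, GoS1); ((1-a)/4, GoS1);
      ((1-a)/4, GoS1); ((1-a)/4, GoS1)].

Lemma loadA (R : realType) (a b : R) X m :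
  load (sA a b) X m = (if same_machine (X 0%N) m then a else 0) +
   (if same_machine (X 1%N) m then b else 0) +
   (if same_machine (X 2%N) m then 1 - a else 0) +
   (if same_machine (X 3%N) m then (1-b)/4 else 0) +
   (if same_machine (X 4%N) m then (1-b)/4 else 0) +
   (if same_machine (X 5%N) m then (1-b)/4 else 0) +
   (if same_machine (X 6%N) m then (1-b)/4 else 0).
Proof. by rewrite /load /= !big_ord_recl big_ord0 /= !addrA addr0. Qed.

Lemma loadB (R : realType) (a b : R) X m :
  load (sB a b) X m = (if same_machine (X 0%N) m then a else 0) +
   (if same_machine (X 1%N) m then b else 0) +
   (if same_machine (X 2%N) m then (1-a)/4 else 0) +
   (if same_machine (X 3%N) m then (1-a)/4 else 0) +
   (if same_machine (X 4%N) m then (1-a)/4 else 0) +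
   (if same_machine (X 5%N) m then (1-a)/4 else 0).
Proof. by rewrite /load /= !big_ord_recl big_ord0 /= !addrA addr0. Qed.

Lemma max_eq1 (R : realType) (x y : R) : x = 1 -> y = 1 -> Num.max x y = 1.
Proof. by move=> -> ->; rewrite maxxx. Qed.

Lemma max_ge (R : realType) (x y : R) : 2 <= x + y -> 1 <= Num.max x y.
Proof. rewrite le_max; case: (leP 1 x) => //= h; lra. Qed.

Lemma validA (R : realType) (a b : R) :
  0 < a -> a < 1 -> 0 < b -> b < 1 -> valid_input (sA a b).
Proof.
move=> a0 a1 b0 b1; split.
  by case=> [|[|[|[|[|[|[|i]]]]]]] //= _; lra.
split.
  exists (fun i => if (i == 0)%N || (i == 2)%N then m2 else m1); split.
    by case=> [|[|[|[|[|[|[|i]]]]]]].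
  rewrite /makespan !loadA /=; apply: max_eq1; lra.
move=> X hf; rewrite /makespan !loadA.
have h3 : X 3%N = m1 by move: (hf 3%N isT) => /=; case: (X 3%N).
have h4 : X 4%N = m1 by move: (hf 4%N isT) => /=; case: (X 4%N).
have h5 : X 5%N = m1 by move: (hf 5%N isT) => /=; case: (X 5%N).
have h6 : X 6%N = m1 by move: (hf 6%N isT) => /=; case: (X 6%N).
rewrite h3 h4 h5 h6.
by case: (X 0%N); case: (X 1%N); case: (X 2%N) => /=; apply: max_ge; lra.
Qed.

Lemma validB (R : realType) (a b : R) :
  0 < a -> a < 1 -> 0 < b -> b < 1 -> a < b -> 1 < a + b -> valid_input (sB a b).
Proof.
move=> a0 a1 b0 b1 ab ab1; split.
  by case=> [|[|[|[|[|[|i]]]]]] //= _; lra.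
split.
  exists (fun i => if (i == 1)%N then m2 else m1); split.
    by case=> [|[|[|[|[|[|i]]]]]].
  rewrite /makespan !loadB /=. rewrite max_l; first lra. lra.
move=> X hf; rewrite /makespan !loadB.
have h3 : X 2%N = m1 by move: (hf 2%N isT) => /=; case: (X 2%N).
have h4 : X 3%N = m1 by move: (hf 3%N isT) => /=; case: (X 3%N).
have h5 : X 4%N = m1 by move: (hf 4%N isT) => /=; case: (X 4%N).
have h6 : X 5%N = m1 by move: (hf 5%N isT) => /=; case: (X 5%N).
rewrite h3 h4 h5 h6.
case: (X 0%N); case: (X 1%N) => /=; rewrite le_max;
  first [apply/orP; left; lra | apply/orP; right; lra].
Qed.

Lemma caseB (R : realType) (M a b t : R) (A : algorithm R) :
  migration_algorithm M A ->
  0 < a -> a < b -> b < 1 -> 1 < a + b -> M * ((1-a)/4) < a ->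
  t < 1 - a + b -> t < a + b -> t < 1 + b ->
  ~ (A [:: (a, GoS2); (b, GoS2)] 0%N = m1 /\ A [:: (a, GoS2); (b, GoS2)] 1%N = m2) ->
  t < alg_makespan A (sB a b).
Proof.
move=> hA a0 ab b1 ab1 hMa t1 t2 t3 hn.
have vB : valid_input (sB a b) by apply: validB => //; lra.
have rB := hA _ vB.
have st : forall k i, (2 <= k)%N -> (k < 6)%N -> (i < 2)%N ->
    A (take k (sB a b)) i = A (take k.+1 (sB a b)) i.
  move=> k i hk1 hk2 hi; apply: stuck_step rB _ _ _ _ => //.
  - exact: leq_trans hi hk1.
  - move=> j hj; apply: ltW; apply: vB.1; exact: ltn_trans hj hk2.
  - case: k hk1 hk2 => [|[|[|[|[|[|k]]]]]] //= _ _; case: i hi => [|[|i]] //= _; lra.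
have F : forall i, (i < 2)%N -> A (sB a b) i = A [:: (a, GoS2); (b, GoS2)] i.
  move=> i hi; have -> : A (sB a b) = A (take 6 (sB a b)) by [].
  by rewrite -(st 5%N) // -(st 4%N) // -(st 3%N) // -(st 2%N).
have hf : feasible (sB a b) (A (sB a b)) := (rB 5%N isT).1.
have h3 : A (sB a b) 2%N = m1 by move: (hf 2%N isT) => /=; case: (A (sB a b) 2%N).
have h4 : A (sB a b) 3%N = m1 by move: (hf 3%N isT) => /=; case: (A (sB a b) 3%N).
have h5 : A (sB a b) 4%N = m1 by move: (hf 4%N isT) => /=; case: (A (sB a b) 4%N).
have h6 : A (sB a b) 5%N = m1 by move: (hf 5%N isT) => /=; case: (A (sB a b) 5%N).
rewrite /alg_makespan /makespan !loadB h3 h4 h5 h6 (F 0%N) // (F 1%N) //.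
move: hn; case: (A _ 0%N); case: (A _ 1%N) => hn /=;
  first [by exfalso; apply: hn | rewrite lt_max; first [apply/orP; left; lra | apply/orP; right; lra]].
Qed.

Lemma caseA (R : realType) (M a b t : R) (A : algorithm R) :
  migration_algorithm M A ->
  0 < a -> a < b -> b < 1 -> M * (1 - a) < a + b -> M * ((1-b)/4) < a ->
  t < 2 - b -> t < 1 + a -> t < 1 - a + b -> t < a + b -> t < 1 + b -> t < 2 ->
  A [:: (a, GoS2); (b, GoS2)] 0%N = m1 -> A [:: (a, GoS2); (b, GoS2)] 1%N = m2 ->
  t < alg_makespan A (sA a b).
Proof.
move=> hA a0 ab b1 hM hMa t1 t2 t3 t4 t5 t6 E0 E1.
have vA : valid_input (sA a b) by apply: validA => //; lra.
have rA := hA _ vA.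
have st : forall k i, (3 <= k)%N -> (k < 7)%N -> (i < 2)%N ->
    A (take k (sA a b)) i = A (take k.+1 (sA a b)) i.
  move=> k i hk1 hk2 hi; apply: stuck_step rA _ _ _ _ => //.
  - exact: leq_trans hi (ltnW hk1).
  - move=> j hj; apply: ltW; apply: vA.1; exact: ltn_trans hj hk2.
  - case: k hk1 hk2 => [|[|[|[|[|[|[|k]]]]]]] //= _ _; case: i hi => [|[|i]] //= _; lra.
have F : forall i, (i < 2)%N -> A (sA a b) i = A (take 3 (sA a b)) i.
  move=> i hi; have -> : A (sA a b) = A (take 7 (sA a b)) by [].
  by rewrite -(st 6%N) // -(st 5%N) // -(st 4%N) // -(st 3%N).
have hm := (rA 2%N isT).2.
have e2 : take 2 (sA a b) = [:: (a, GoS2); (b, GoS2)] by [].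
rewrite e2 in hm.
have hf : feasible (sA a b) (A (sA a b)) := (rA 6%N isT).1.
have h3 : A (sA a b) 3%N = m1 by move: (hf 3%N isT) => /=; case: (A (sA a b) 3%N).
have h4 : A (sA a b) 4%N = m1 by move: (hf 4%N isT) => /=; case: (A (sA a b) 4%N).
have h5 : A (sA a b) 5%N = m1 by move: (hf 5%N isT) => /=; case: (A (sA a b) 5%N).
have h6 : A (sA a b) 6%N = m1 by move: (hf 6%N isT) => /=; case: (A (sA a b) 6%N).
rewrite /alg_makespan /makespan !loadA h3 h4 h5 h6 (F 0%N) // (F 1%N) //.
move: hm; rewrite /migrated !big_ord_recl big_ord0 E0 E1 /=.
move: (A (take 3 (sA a b))) => X3.
case: (X3 0%N); case: (X3 1%N); case: (A (sA a b) 2%N) => /= hm;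
  first [by exfalso; lra | rewrite lt_max; first [apply/orP; left; lra | apply/orP; right; lra]].
Qed.

Theorem mainTheorem4 (R : realType) (M : R) (A : algorithm R) :
  5 / 2 <= M ->
  migration_algorithm M A ->
  forall rho : R, rho < (2 * M + 5) / (2 * M + 3) ->
  exists s : seq (job R), valid_input s /\ rho < alg_makespan A s.
Proof.
move=> hM hA rho hrho.
have hpos : 0 < 2 * M + 3 by lra.
set d0 := 2 / (2 * M + 3).
have hd0 : (2 * M + 3) * d0 = 2 by rewrite /d0 mulrC divfK //; lra.
have hd0' : (2 * M + 5) / (2 * M + 3) = 1 + d0.
  by rewrite /d0; field; lra.
rewrite hd0' in hrho.
have d0pos : 0 < d0 by rewrite /d0 divr_gt0 //; lra.
have d0le : d0 <= 1/4.
  have : 0 <= (M - 5/2) * d0 by apply: mulr_ge0; lra.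
  lra.
set r := Num.max rho 1.
have r1 : 1 <= r by rewrite le_max lexx orbT.
have rr : rho <= r by rewrite le_max lexx.
have rlt : r < 1 + d0 by rewrite gt_max; apply/andP; split; lra.
set d := (r - 1 + d0) / 2.
have dlo : d0 / 2 <= d by rewrite /d; lra.
have dhi : d < d0 by rewrite /d; lra.
have rd : rho < 1 + d by rewrite /d; lra.
have Md : M * d < M * d0 by rewrite ltr_pM2l //; lra.
set a := 1 - d - d0.
set b := 1 - (d + d0) / 2.
have a0 : 0 < a by rewrite /a; lra.
have ab : a < b by rewrite /a /b; lra.
have b1 : b < 1 by rewrite /b; lra.
have ab1 : 1 < a + b by rewrite /a /b; lra.
have hMd0 : M * d0 = 1 - 3/2 * d0 by lra.
have c1 : M * (1 - a) < a + b by rewrite /a /b; lra.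
have c2 : M * ((1 - b) / 4) < a by rewrite /a /b; lra.
have c3 : M * ((1 - a) / 4) < a by rewrite /a /b; lra.
have t1 : 1 + d < 2 - b by rewrite /b; lra.
have t2 : 1 + d < 1 + a by rewrite /a; lra.
have t3 : 1 + d < 1 - a + b by rewrite /a /b; lra.
have t4 : 1 + d < a + b by rewrite /a /b; lra.
have t5 : 1 + d < 1 + b by rewrite /b; lra.
have t6 : 1 + d < 2 by lra.
case E0: (A [:: (a, GoS2); (b, GoS2)] 0%N); case E1: (A [:: (a, GoS2); (b, GoS2)] 1%N).
- exists (sB a b); split; first by apply: validB => //; lra.
  apply: lt_trans rd _; apply: (caseB hA) => //; move=> -[h0 h1]; by move: E1; rewrite h1.
- exists (sA a b); split; first by apply: validA => //; lra.
  apply: lt_trans rd _; exact: (caseA hA).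
- exists (sB a b); split; first by apply: validB => //; lra.
  apply: lt_trans rd _; apply: (caseB hA) => //; by move=> -[h0 h1]; move: E0 E1; rewrite h0 h1.
- exists (sB a b); split; first by apply: validB => //; lra.
  apply: lt_trans rd _; apply: (caseB hA) => //; by move=> -[h0 h1]; move: E0 E1; rewrite h0 h1.
Qed.
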